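(* If $\Gamma$ is a locally-finite undirected simple geodetic graph in which every isometrically embedded circuit has length at most five, then every embedded circuit in $\Gamma$ has diameter at most two.
   Context: A graph is geodetic if between any pair of vertices there is a unique shortest path (geodesic); in particular it is connected, with path metric $d$. A path $u_0,u_1,\dots,u_n$ is an embedded circuit (of length $n$) if $u_0,\dots,u_{n-1}$ are distinct and $u_0=u_n$ (for adjacent $u,v$, the path $u,v,u$ is an embedded circuit of length two). An embedded circuit is isometrically embedded if $d(u_i,u_j)=\min\{j-i,n+i-j\}$ for all $0\le i<j<n$. The diameter of an embedded circuit is the maximum of $d(u_i,u_j)$ over its vertices, with $d$ the distance in $\Gamma$. *)

(* Defs.v *)
From Stdlib Require Import Arith List.

Section Graphs.
Variable V : Type.
Variable adj : V -> V -> Prop.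

Definition simple_graph : Prop :=
  (forall u v, adj u v -> adj v u) /\ (forall u, ~ adj u u).

Definition locally_finite : Prop :=
  forall v, exists l : list V, forall w, adj v w -> In w l.

Definition walk (p : nat -> V) (k : nat) (u v : V) : Prop :=
  p 0 = u /\ p k = v /\ forall i, i < k -> adj (p i) (p (S i)).

Definition dist (u v : V) (k : nat) : Prop :=
  (exists p, walk p k u v) /\ (forall p m, walk p m u v -> k <= m).

Definition connected : Prop := forall u v, exists k, dist u v k.

Definition geodetic : Prop :=
  connected /\
  forall u v k p q, dist u v k -> walk p k u v -> walk q k u v ->
    forall i, i <= k -> p i = q i.

Definition embedded_circuit (u : nat -> V) (n : nat) : Prop :=
  (forall i, i < n -> adj (u i) (u (S i))) /\ u n = u 0 /\
  (forall i j, i < n -> j < n -> u i = u j -> i = j).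

Definition isometric_circuit (u : nat -> V) (n : nat) : Prop :=
  embedded_circuit u n /\
  forall i j, i < j -> j < n -> dist (u i) (u j) (Nat.min (j - i) (n + i - j)).

Definition circuit_diam_le (u : nat -> V) (n : nat) (D : nat) : Prop :=
  forall i j k, i <= n -> j <= n -> dist (u i) (u j) k -> k <= D.

End Graphs.

(* Main.v *)
Require Import Defs.
From Stdlib Require Import Arith List ZArith Lia Classical ClassicalEpsilon.

Section Main.
Variable V : Type.
Variable adj : V -> V -> Prop.
Hypothesis Hsym : forall u v, adj u v -> adj v u.
Hypothesis Hirr : forall u, ~ adj u u.
Hypothesis Hconn : connected V adj.
Hypothesis Huniq : forall u v k p q, dist V adj u v k -> walk V adj p k u v ->
  walk V adj q k u v -> forall i, i <= k -> p i = q i.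

Definition dd (u v : V) : nat :=
  proj1_sig (constructive_indefinite_description _ (Hconn u v)).

Lemma dd_spec u v : dist V adj u v (dd u v).
Proof. unfold dd. destruct (constructive_indefinite_description _ _) as [k Hk]. exact Hk. Qed.

Lemma dd_le p m u v : walk V adj p m u v -> dd u v <= m.
Proof. intros H. destruct (dd_spec u v) as [_ H2]. eauto. Qed.

Lemma dd_walk u v : exists p, walk V adj p (dd u v) u v.
Proof. destruct (dd_spec u v) as [H _]. exact H. Qed.

Lemma dist_dd u v k : dist V adj u v k -> k = dd u v.
Proof.
  intros [[p Hp] H]. destruct (dd_spec u v) as [[q Hq] H'].
  specialize (H _ _ Hq). specialize (H' _ _ Hp). lia.
Qed.

Lemma walk_rev p k u v : walk V adj p k u v -> walk V adj (fun t => p (k - t)) k v u.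
Proof.
  intros [H0 [H1 H2]]. split; [|split].
  - rewrite Nat.sub_0_r; auto.
  - rewrite Nat.sub_diag; auto.
  - intros i Hi. apply Hsym. replace (k - i) with (S (k - S i)) by lia. apply H2. lia.
Qed.

Lemma walk_cat p q k1 k2 u v w : walk V adj p k1 u v -> walk V adj q k2 v w ->
  walk V adj (fun t => if t <=? k1 then p t else q (t - k1)) (k1 + k2) u w.
Proof.
  intros [Hp0 [Hp1 Hp2]] [Hq0 [Hq1 Hq2]]. split; [|split].
  - simpl. auto.
  - destruct (Nat.leb_spec (k1 + k2) k1).
    + assert (k2 = 0) by lia. subst k2. rewrite Nat.add_0_r. congruence.
    + replace (k1 + k2 - k1) with k2 by lia. auto.
  - intros i Hi. destruct (Nat.leb_spec i k1); destruct (Nat.leb_spec (S i) k1).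
    + apply Hp2. lia.
    + assert (i = k1) by lia. subst i. replace (S k1 - k1) with 1 by lia.
      rewrite Hp1, <- Hq0. apply Hq2. lia.
    + lia.
    + replace (S i - k1) with (S (i - k1)) by lia. apply Hq2. lia.
Qed.

Lemma walk_sub p k u v a b : walk V adj p k u v -> a <= b -> b <= k ->
  walk V adj (fun t => p (a + t)) (b - a) (p a) (p b).
Proof.
  intros [H0 [H1 H2]] Hab Hbk. split; [|split].
  - rewrite Nat.add_0_r; auto.
  - f_equal; lia.
  - intros i Hi. replace (a + S i) with (S (a + i)) by lia. apply H2. lia.
Qed.

Lemma dd_refl u : dd u u = 0.
Proof.
  assert (walk V adj (fun _ => u) 0 u u) by (split; [|split]; auto; intros; lia).
  apply dd_le in H. lia.
Qed.

Lemma dd_zero u v : dd u v = 0 -> u = v.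
Proof.
  intros H. destruct (dd_walk u v) as [p [H0 [H1 _]]]. rewrite H in H1. congruence.
Qed.

Lemma dd_one u v : dd u v = 1 -> adj u v.
Proof.
  intros H. destruct (dd_walk u v) as [p [H0 [H1 H2]]]. rewrite H in H1, H2.
  specialize (H2 0 ltac:(lia)). congruence.
Qed.

Lemma dd_two u v : dd u v = 2 -> exists w, adj u w /\ adj w v.
Proof.
  intros H. destruct (dd_walk u v) as [p [H0 [H1 H2]]]. rewrite H in H1, H2.
  exists (p 1). split.
  - rewrite <- H0. apply H2. lia.
  - rewrite <- H1. apply H2. lia.
Qed.

Lemma dd_adj u v : adj u v -> dd u v <= 1.
Proof.
  intros H. apply (dd_le (fun t => match t with 0 => u | _ => v end)).
  split; [|split]; auto. intros i Hi. destruct i; [auto|lia].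
Qed.

Lemma dd_sym u v : dd u v = dd v u.
Proof.
  destruct (dd_walk u v) as [p Hp]. destruct (dd_walk v u) as [q Hq].
  apply walk_rev in Hp. apply walk_rev in Hq. apply dd_le in Hp. apply dd_le in Hq. lia.
Qed.

Lemma dd_tri u v w : dd u w <= dd u v + dd v w.
Proof.
  destruct (dd_walk u v) as [p Hp]. destruct (dd_walk v w) as [q Hq].
  eapply dd_le. apply (walk_cat _ _ _ _ _ _ _ Hp Hq).
Qed.

Lemma geo_uniq p q u v : walk V adj p (dd u v) u v -> walk V adj q (dd u v) u v ->
  forall i, i <= dd u v -> p i = q i.
Proof. intros. eapply Huniq; eauto. apply dd_spec. Qed.

Lemma subgeo R u v a b : walk V adj R (dd u v) u v -> a <= b -> b <= dd u v ->
  dd (R a) (R b) = b - a.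
Proof.
  intros HR Hab Hb.
  pose proof (walk_sub _ _ _ _ _ _ HR Hab Hb) as Hs. apply dd_le in Hs.
  pose proof (walk_sub _ _ _ _ _ _ HR (Nat.le_0_l a) ltac:(lia)) as H1. apply dd_le in H1.
  pose proof (walk_sub _ _ _ _ _ _ HR Hb (le_n _)) as H2. apply dd_le in H2.
  destruct HR as [H0 [Hd _]]. rewrite H0 in H1. rewrite Hd in H2.
  pose proof (dd_tri u (R a) v). pose proof (dd_tri (R a) (R b) v). lia.
Qed.

Lemma geo_inj R u v a b : walk V adj R (dd u v) u v -> a < b -> b <= dd u v -> R a <> R b.
Proof.
  intros HR Hab Hb He. pose proof (subgeo R u v a b HR ltac:(lia) Hb).
  rewrite He, dd_refl in H. lia.
Qed.

Definition w2 (a b c : V) (t : nat) : V :=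
  match t with 0 => a | 1 => b | _ => c end.
Definition w3 (a b c d : V) (t : nat) : V :=
  match t with 0 => a | 1 => b | 2 => c | _ => d end.
Definition w4 (a b c d e : V) (t : nat) : V :=
  match t with 0 => a | 1 => b | 2 => c | 3 => d | _ => e end.

Lemma uniq2 a b c b' : dd a c = 2 -> adj a b -> adj b c -> adj a b' -> adj b' c -> b = b'.
Proof.
  intros Hd H1 H2 H3 H4.
  assert (W1 : walk V adj (w2 a b c) (dd a c) a c).
  { rewrite Hd. split; [|split]; auto. intros i Hi. destruct i as [|[|]]; simpl; auto; lia. }
  assert (W2 : walk V adj (w2 a b' c) (dd a c) a c).
  { rewrite Hd. split; [|split]; auto. intros i Hi. destruct i as [|[|]]; simpl; auto; lia. }
  exact (geo_uniq _ _ _ _ W1 W2 1 ltac:(lia)).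
Qed.

Lemma uniq3 a b c d b' c' : dd a d = 3 -> adj a b -> adj b c -> adj c d ->
  adj a b' -> adj b' c' -> adj c' d -> b = b' /\ c = c'.
Proof.
  intros Hd H1 H2 H3 H4 H5 H6.
  assert (W1 : walk V adj (w3 a b c d) (dd a d) a d).
  { rewrite Hd. split; [|split]; auto. intros i Hi. destruct i as [|[|[|]]]; simpl; auto; lia. }
  assert (W2 : walk V adj (w3 a b' c' d) (dd a d) a d).
  { rewrite Hd. split; [|split]; auto. intros i Hi. destruct i as [|[|[|]]]; simpl; auto; lia. }
  split; [exact (geo_uniq _ _ _ _ W1 W2 1 ltac:(lia))|exact (geo_uniq _ _ _ _ W1 W2 2 ltac:(lia))].
Qed.

Lemma uniq4 a b c d e b' c' d' : dd a e = 4 -> adj a b -> adj b c -> adj c d -> adj d e ->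
  adj a b' -> adj b' c' -> adj c' d' -> adj d' e -> b = b'.
Proof.
  intros Hd H1 H2 H3 H4 H5 H6 H7 H8.
  assert (W1 : walk V adj (w4 a b c d e) (dd a e) a e).
  { rewrite Hd. split; [|split]; auto. intros i Hi. destruct i as [|[|[|[|]]]]; simpl; auto; lia. }
  assert (W2 : walk V adj (w4 a b' c' d' e) (dd a e) a e).
  { rewrite Hd. split; [|split]; auto. intros i Hi. destruct i as [|[|[|[|]]]]; simpl; auto; lia. }
  exact (geo_uniq _ _ _ _ W1 W2 1 ltac:(lia)).
Qed.

Lemma first_hit (P : nat -> Prop) m : P m -> exists b, b <= m /\ P b /\ forall c, c < b -> ~ P c.
Proof.
  induction m as [m IHm] using (well_founded_induction lt_wf). intros Hm.
  destruct (classic (exists c, c < m /\ P c)) as [[c [Hc Pc]]|Hn].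
  - destruct (IHm c Hc Pc) as [b [Hb1 [Hb2 Hb3]]]. exists b. split; [lia|auto].
  - exists m. split; [lia|]. split; auto. intros c Hc Pc. apply Hn. eauto.
Qed.

Definition cyc (U : Z -> V) (n : Z) : Prop :=
  (3 <= n)%Z /\ (forall t, U (t + n)%Z = U t) /\ (forall t, adj (U t) (U (t + 1)%Z)) /\
  (forall s t, (0 <= t - s < n)%Z -> U s = U t -> s = t).

Section Cyc.
Variable U : Z -> V.
Variable n : Z.
Hypothesis Hc : cyc U n.

Lemma U_n3 : (3 <= n)%Z.
Proof. apply Hc. Qed.

Lemma U_modp : forall t q, (0 <= q)%Z -> U (t + q * n)%Z = U t.
Proof.
  intros t q Hq. pattern q. apply natlike_ind; auto.
  - f_equal; lia.
  - intros x Hx IH. destruct Hc as (_ & Hp & _).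
    replace (t + Z.succ x * n)%Z with ((t + x * n) + n)%Z by lia. rewrite Hp. auto.
Qed.

Lemma U_mod : forall t q, U (t + q * n)%Z = U t.
Proof.
  intros t q. destruct (Z_le_gt_dec 0 q).
  - apply U_modp; auto.
  - rewrite <- (U_modp (t + q * n) (- q)) by lia. f_equal; lia.
Qed.

Lemma eqU : forall s t, (t = s \/ t = s + n \/ t = s - n \/ t = s + 2 * n \/ t = s - 2 * n)%Z -> U s = U t.
Proof.
  intros s t H. destruct H as [H|[H|[H|[H|H]]]]; subst.
  - auto.
  - rewrite <- (U_mod s 1). f_equal; lia.
  - rewrite <- (U_mod (s - n) 1). f_equal; lia.
  - rewrite <- (U_mod s 2). f_equal; lia.
  - rewrite <- (U_mod (s - 2 * n) 2). f_equal; lia.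
Qed.

Lemma U_norm : forall s b, exists j, (0 <= j < n)%Z /\ U b = U (s + j)%Z.
Proof.
  intros s b. pose proof U_n3. exists ((b - s) mod n)%Z. split.
  - apply Z.mod_pos_bound. lia.
  - rewrite <- (U_mod (s + (b - s) mod n) ((b - s) / n)). f_equal.
    pose proof (Z.div_mod (b - s) n ltac:(lia)). lia.
Qed.

Lemma U_inj : forall s t, (0 <= t - s < n)%Z -> U s = U t -> s = t.
Proof. apply Hc. Qed.

Lemma neqU : forall s t, (0 < t - s < n \/ 0 < s - t < n)%Z -> U s <> U t.
Proof.
  intros s t H He. destruct H.
  - apply U_inj in He; lia.
  - symmetry in He. apply U_inj in He; lia.
Qed.

Lemma U_shift : forall s t k, U s = U t -> U (s + k)%Z = U (t + k)%Z.
Proof.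
  intros s t k He. pose proof U_n3.
  pose proof (Z.div_mod (t - s) n ltac:(lia)) as Hdm.
  pose proof (Z.mod_pos_bound (t - s) n ltac:(lia)) as Hb.
  set (r := ((t - s) mod n)%Z) in *. set (q := ((t - s) / n)%Z) in *.
  assert (Ht : U t = U (s + r)%Z).
  { rewrite <- (U_mod (s + r) q). f_equal. lia. }
  rewrite <- He in Ht. apply U_inj in Ht; [|lia].
  rewrite <- (U_mod (s + k) q). f_equal. lia.
Qed.

Lemma adjU0 : forall a b, b = (a + 1)%Z -> adj (U a) (U b).
Proof. intros a b ->. apply Hc. Qed.

Lemma adjU : forall s t, (t = s + 1 \/ t = s - 1 \/ t = s + 1 - n \/ t = s - 1 + n)%Z -> adj (U s) (U t).
Proof.
  intros s t H.
  destruct H as [H|[H|[H|H]]].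
  - apply adjU0; auto.
  - apply Hsym. apply adjU0. lia.
  - rewrite <- (U_mod t 1). apply adjU0. lia.
  - rewrite <- (U_mod t (-1)). apply Hsym. apply adjU0. lia.
Qed.

Lemma walk_arc : forall s k, (0 <= k)%Z ->
  walk V adj (fun t => U (s + Z.of_nat t)%Z) (Z.to_nat k) (U s) (U (s + k)%Z).
Proof.
  intros s k Hk. split; [|split].
  - f_equal; lia.
  - f_equal; lia.
  - intros i Hi. apply adjU. lia.
Qed.

Lemma walk_arcb : forall s k, (0 <= k)%Z ->
  walk V adj (fun t => U (s - Z.of_nat t)%Z) (Z.to_nat k) (U s) (U (s - k)%Z).
Proof.
  intros s k Hk. split; [|split].
  - f_equal; lia.
  - f_equal; lia.
  - intros i Hi. apply adjU. lia.
Qed.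

Lemma dd_arc : forall s k, (0 <= k)%Z -> dd (U s) (U (s + k)%Z) <= Z.to_nat k.
Proof. intros. eapply dd_le. apply walk_arc; auto. Qed.

Lemma dd_U1 : forall s t, (t = s + 1 \/ t = s - 1 \/ t = s + 1 - n \/ t = s - 1 + n)%Z -> dd (U s) (U t) <= 1.
Proof. intros. apply dd_adj. apply adjU. auto. Qed.

End Cyc.

Lemma cyc_rot U n c : cyc U n -> cyc (fun t => U (c + t)%Z) n.
Proof.
  intros (H3 & Hp & Ha & Hi). split; [|split; [|split]]; auto.
  - intros t. rewrite <- (Hp (c + t)%Z). f_equal; lia.
  - intros t. replace (c + (t + 1))%Z with ((c + t) + 1)%Z by lia. apply Ha.
  - intros s t Hst He. apply Hi in He; lia.
Qed.

Lemma cyc_refl U n c : cyc U n -> cyc (fun t => U (c - t)%Z) n.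
Proof.
  intros Hc. pose proof Hc as (H3 & Hp & Ha & Hi). split; [|split; [|split]]; auto.
  - intros t. rewrite <- (U_mod U n Hc (c - (t + n)) 1). f_equal; lia.
  - intros t. apply (adjU U n Hc). lia.
  - intros s t Hst He. symmetry in He. apply Hi in He; lia.
Qed.

Section IHsec.
Variable n : Z.
Hypothesis IH : forall m (w : nat -> V), (Z.of_nat m < n)%Z ->
  embedded_circuit V adj w m -> circuit_diam_le V adj w m 2.

Lemma SPL U i a p l : cyc U n -> (1 <= a)%Z -> (a < n)%Z -> 1 <= l ->
  walk V adj p l (U (i + a)%Z) (U i) ->
  (forall t1 t2, 0 < t1 < l -> 0 < t2 < l -> p t1 = p t2 -> t1 = t2) ->
  (forall t s, 0 < t < l -> p t <> U s) ->
  (a + Z.of_nat l < n)%Z ->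
  forall j1 j2, (0 <= j1 <= a)%Z -> (0 <= j2 <= a)%Z -> dd (U (i + j1)%Z) (U (i + j2)%Z) <= 2.
Proof.
  intros Hc Ha1 Han Hl [Hp0 [Hpl Hpa]] Hinj Hoff Hlen j1 j2 Hj1 Hj2.
  set (A := Z.to_nat a).
  set (w := fun t : nat => if t <=? A then U (i + Z.of_nat t)%Z else p (t - A)).
  assert (Hemb : embedded_circuit V adj w (A + l)).
  { split; [|split].
    - intros t Ht. unfold w. destruct (Nat.leb_spec t A); destruct (Nat.leb_spec (S t) A).
      + apply (adjU U n Hc). lia.
      + assert (t = A) by lia. subst t. replace (S A - A) with 1 by lia.
        replace (i + Z.of_nat A)%Z with (i + a)%Z by lia. rewrite <- Hp0. apply Hpa. lia.
      + lia.
      + replace (S t - A) with (S (t - A)) by lia. apply Hpa. lia.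
    - unfold w. destruct (Nat.leb_spec (A + l) A); [lia|]. destruct (Nat.leb_spec 0 A); [|lia].
      replace (A + l - A) with l by lia. rewrite Hpl. f_equal; lia.
    - intros t1 t2 Ht1 Ht2 He. unfold w in He.
      destruct (Nat.leb_spec t1 A); destruct (Nat.leb_spec t2 A).
      + destruct (le_lt_dec t1 t2).
        * apply (U_inj U n Hc) in He; lia.
        * symmetry in He. apply (U_inj U n Hc) in He; lia.
      + exfalso. symmetry in He. apply (Hoff (t2 - A) _ ltac:(lia) He).
      + exfalso. apply (Hoff (t1 - A) _ ltac:(lia) He).
      + apply Hinj in He; lia. }
  assert (Hm : (Z.of_nat (A + l) < n)%Z) by lia.
  pose proof (IH _ _ Hm Hemb (Z.to_nat j1) (Z.to_nat j2) (dd (U (i + j1)%Z) (U (i + j2)%Z))) as H.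
  apply H; try lia.
  unfold w. destruct (Nat.leb_spec (Z.to_nat j1) A); [|lia].
  destruct (Nat.leb_spec (Z.to_nat j2) A); [|lia].
  rewrite !Z2Nat.id by lia. apply dd_spec.
Qed.

Definition sep U (s a : Z) : Prop :=
 (forall j1 j2, (0 <= j1 <= a)%Z -> (0 <= j2 <= a)%Z -> dd (U (s + j1)%Z) (U (s + j2)%Z) <= 2) /\
 (forall j1 j2, (a <= j1 <= n)%Z -> (a <= j2 <= n)%Z -> dd (U (s + j1)%Z) (U (s + j2)%Z) <= 2).

Lemma SEG U s a p l : cyc U n -> walk V adj p l (U (s + a)%Z) (U s) ->
  (forall t1 t2, 0 < t1 < l -> 0 < t2 < l -> p t1 = p t2 -> t1 = t2) ->
  (forall t x, 0 < t < l -> p t <> U x) -> 1 <= l ->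
  (Z.of_nat l < a)%Z -> (Z.of_nat l < n - a)%Z -> sep U s a.
Proof.
  intros Hc Hw Hinj Hoff Hl H1 H2. split.
  - intros. eapply SPL; eauto; lia.
  - intros j1 j2 Hj1 Hj2.
    replace (s + j1)%Z with (s + a + (j1 - a))%Z by lia.
    replace (s + j2)%Z with (s + a + (j2 - a))%Z by lia.
    apply (SPL U (s + a) (n - a) (fun t => p (l - t)) l Hc); try lia.
    + apply walk_rev in Hw. replace (s + a + (n - a))%Z with (s + n)%Z by lia.
      rewrite (proj1 (proj2 Hc)). exact Hw.
    + intros t1 t2 Ht1 Ht2 He. apply Hinj in He; lia.
    + intros t x Ht. apply Hoff. lia.
Qed.

Lemma chord U s a : cyc U n -> adj (U s) (U (s + a)%Z) -> (2 <= a <= n - 2)%Z -> sep U s a.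
Proof.
  intros Hc Ha Hr.
  apply (SEG U s a (fun t => match t with 0 => U (s + a)%Z | _ => U s end) 1 Hc); try lia.
  all: try (intros; lia).
  split; [|split]; auto. intros i Hi. destruct i; [|lia]. apply Hsym. auto.
Qed.

Lemma sep_use U s a x y j1 j2 : sep U s a -> x = U (s + j1)%Z -> y = U (s + j2)%Z ->
  ((0 <= j1 <= a /\ 0 <= j2 <= a) \/ (a <= j1 <= n /\ a <= j2 <= n))%Z -> dd x y <= 2.
Proof.
  intros [H1 H2] -> -> [[? ?]|[? ?]]; auto.
Qed.

Lemma GEOSEG U u v R a b e1 e2 : cyc U n -> walk V adj R (dd u v) u v -> a < b -> b <= dd u v ->
  R a = U e1 -> R b = U e2 -> (forall c x, a < c < b -> R c <> U x) ->
  (b = S a /\ (U e2 = U (e1 + 1)%Z \/ U e2 = U (e1 - 1)%Z)) \/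
  (exists j, (2 <= j <= n - 2)%Z /\ U e2 = U (e1 + j)%Z /\ sep U e1 j).
Proof.
  intros Hc HR Hab Hb Ha Hbe Hoff.
  pose proof (U_n3 U n Hc) as Hn3.
  assert (Hd : dd (U e1) (U e2) = b - a).
  { rewrite <- Ha, <- Hbe. apply (subgeo R u v a b HR); lia. }
  destruct (U_norm U n Hc e1 e2) as [j [Hj Hej]].
  assert (Hj0 : j <> 0%Z).
  { intros ->. rewrite Z.add_0_r in Hej. rewrite Hej, dd_refl in Hd. lia. }
  assert (Hl1 : b - a <= Z.to_nat j).
  { rewrite <- Hd, Hej. apply (dd_arc U n Hc); lia. }
  assert (Hl2 : b - a <= Z.to_nat (n - j)).
  { rewrite <- Hd, dd_sym, Hej.
    replace (U e1) with (U (e1 + j + (n - j))%Z) by (apply (eqU U n Hc); lia).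
    apply (dd_arc U n Hc); lia. }
  pose proof (walk_sub _ _ _ _ _ _ HR (Nat.lt_le_incl _ _ Hab) Hb) as W2.
  rewrite Ha, Hbe in W2.
  destruct (Z_lt_le_dec (Z.of_nat (b - a)) j) as [Hlt1|Hge1];
  [destruct (Z_lt_le_dec (Z.of_nat (b - a)) (n - j)) as [Hlt2|Hge2]|].
  - right. exists j. split; [lia|]. split; [auto|].
    apply (SEG U e1 j (fun t => R (a + (b - a - t))) (b - a) Hc).
    + pose proof (walk_rev _ _ _ _ (walk_sub _ _ _ _ _ _ HR (Nat.lt_le_incl _ _ Hab) Hb)) as W.
      rewrite Hbe, Ha, Hej in W. exact W.
    + intros t1 t2 Ht1 Ht2 He.
      destruct (Nat.lt_trichotomy t1 t2) as [Hlt|[Heq|Hgt]]; auto; exfalso.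
      * apply (geo_inj R u v (a + (b - a - t2)) (a + (b - a - t1)) HR); try lia. auto.
      * apply (geo_inj R u v (a + (b - a - t1)) (a + (b - a - t2)) HR); try lia. auto.
    + intros t x Ht. apply Hoff. lia.
    + lia.
    + lia.
    + lia.
  - left.
    assert (Hlen : b - a = Z.to_nat (n - j)) by lia.
    pose proof (walk_arcb U n Hc e1 (n - j) ltac:(lia)) as W1.
    replace (U (e1 - (n - j))%Z) with (U e2) in W1 by (rewrite Hej; apply (eqU U n Hc); lia).
    rewrite <- Hlen, <- Hd in W1. rewrite <- Hd in W2.
    pose proof (geo_uniq _ _ _ _ W1 W2 1 ltac:(lia)) as E. cbv beta in E.
    destruct (Nat.eq_dec b (S a)) as [Hba|Hba].
    + split; auto. right. rewrite Hej. apply (eqU U n Hc). lia.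
    + exfalso. apply (Hoff (a + 1) (e1 - 1)%Z). lia. rewrite <- E. f_equal; lia.
  - left.
    assert (Hlen : b - a = Z.to_nat j) by lia.
    pose proof (walk_arc U n Hc e1 j ltac:(lia)) as W1.
    rewrite <- Hej in W1.
    rewrite <- Hlen, <- Hd in W1. rewrite <- Hd in W2.
    pose proof (geo_uniq _ _ _ _ W1 W2 1 ltac:(lia)) as E. cbv beta in E.
    destruct (Nat.eq_dec b (S a)) as [Hba|Hba].
    + split; auto. left. rewrite Hej. f_equal. lia.
    + exfalso. apply (Hoff (a + 1) (e1 + 1)%Z). lia. rewrite <- E. f_equal; lia.
Qed.

Lemma P1 U a y Q : cyc U n -> dd (U a) y = 3 -> (exists b, y = U b) -> walk V adj Q 3 (U a) y ->
  Q 1 = U (a + 1)%Z \/ Q 1 = U (a - 1)%Z.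
Proof.
  intros Hc Hd [b Hb] HQ.
  assert (HQg : walk V adj Q (dd (U a) y) (U a) y) by (rewrite Hd; exact HQ).
  destruct (first_hit (fun g => 1 <= g /\ exists s, Q g = U s) 3) as [be [Hbe [[Hbe1 [e2 He2]] Hmin]]].
  { split; [lia|]. exists b. destruct HQ as [_ [H3 _]]. rewrite H3. auto. }
  assert (HQ0 : Q 0 = U a) by apply HQ.
  assert (Hoff : forall c x, 0 < c < be -> Q c <> U x).
  { intros c x Hc1 Hcx. apply (Hmin c); [lia|]. split; [lia|]. eauto. }
  destruct (GEOSEG U (U a) y Q 0 be a e2 Hc HQg ltac:(lia) ltac:(lia) HQ0 He2 Hoff)
    as [[Hb1 Hed]|[j [Hj [He Hsep]]]].
  - subst be. rewrite He2. auto.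
  - exfalso. destruct (U_norm U n Hc a b) as [k [Hk Hbk]].
    destruct (Z_le_gt_dec k j).
    + assert (dd (U a) y <= 2); [|lia].
      apply (sep_use U a j _ _ 0%Z k Hsep); [f_equal; lia|congruence|lia].
    + assert (dd (U a) y <= 2); [|lia].
      apply (sep_use U a j _ _ n k Hsep); [|congruence|lia].
      symmetry. apply (eqU U n Hc). lia.
Qed.

Lemma P1e U x b Q : cyc U n -> dd x (U b) = 3 -> (exists a, x = U a) -> walk V adj Q 3 x (U b) ->
  Q 2 = U (b + 1)%Z \/ Q 2 = U (b - 1)%Z.
Proof.
  intros Hc Hd Hx HQ. apply walk_rev in HQ.
  rewrite dd_sym in Hd.
  exact (P1 U b x _ Hc Hd Hx HQ).
Qed.

Lemma le_via2 x y z : adj x y -> adj y z -> dd x z <= 2.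
Proof. intros. pose proof (dd_tri x y z). pose proof (dd_adj _ _ H). pose proof (dd_adj _ _ H0). lia. Qed.

Lemma dd_ge1 x y : x <> y -> 1 <= dd x y.
Proof. intros H. destruct (dd x y) eqn:E; [|lia]. apply dd_zero in E. congruence. Qed.

Ltac adjt Hc := apply (adjU _ _ Hc); lia.
Ltac neqt Hc H := exfalso; refine (neqU _ _ Hc _ _ _ H); lia.

Lemma adj_eq (U : Z -> V) (x y x' y' : Z) : adj (U x) (U y) -> x' = x -> y' = y -> adj (U x') (U y').
Proof. intros H -> ->. auto. Qed.

Lemma DCg U a : cyc U n -> adj (U 0%Z) (U a) -> (2 <= a <= n - 2)%Z -> dd (U 1%Z) (U (a+1)%Z) = 3 ->
  (3 <= a)%Z /\ dd (U 2%Z) (U (a+1)%Z) = 3 /\ dd (U 1%Z) (U (a+2)%Z) = 3.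
Proof.
  intros Hc H0a Ha Hd. pose proof (U_n3 U n Hc) as Hn3.
  assert (Hsep : sep U 0 a) by (apply chord; auto; rewrite Z.add_0_l; auto).
  assert (A10 : adj (U 1%Z) (U 0%Z)) by adjt Hc.
  assert (Aa : adj (U a) (U (a+1)%Z)) by adjt Hc.
  assert (f1 : dd (U 1%Z) (U a) = 2).
  { pose proof (le_via2 _ _ _ A10 H0a). pose proof (dd_tri (U 1%Z) (U a) (U (a+1)%Z)).
    pose proof (dd_adj _ _ Aa). lia. }
  assert (Ha3 : (3 <= a)%Z).
  { destruct (Z.eq_dec a 2); [|lia]. subst a.
    assert (adj (U 1%Z) (U 2%Z)) by adjt Hc. apply dd_adj in H. lia. }
  split; [auto|split].
  - pose proof (dd_tri (U 1%Z) (U 2%Z) (U (a+1)%Z)).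
    assert (dd (U 1%Z) (U 2%Z) <= 1) by (apply dd_adj; adjt Hc).
    pose proof (dd_tri (U 2%Z) (U a) (U (a+1)%Z)). pose proof (dd_adj _ _ Aa).
    assert (dd (U 2%Z) (U a) <= 2).
    { apply (sep_use U 0 a _ _ 2%Z a Hsep); [f_equal; lia|f_equal; lia|lia]. }
    assert (dd (U 2%Z) (U (a+1)%Z) <> 2); [|lia].
    intros E. apply dd_two in E. destruct E as [w [Hw1 Hw2]].
    assert (A12 : adj (U 1%Z) (U 2%Z)) by adjt Hc.
    destruct (uniq3 _ _ _ _ _ _ Hd A12 Hw1 Hw2 A10 H0a Aa) as [E _]. neqt Hc E.
  - pose proof (dd_tri (U 1%Z) (U (a+2)%Z) (U (a+1)%Z)).
    assert (dd (U (a+2)%Z) (U (a+1)%Z) <= 1) by (apply dd_adj; adjt Hc).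
    pose proof (dd_tri (U 1%Z) (U 0%Z) (U (a+2)%Z)). pose proof (dd_adj _ _ A10).
    assert (dd (U 0%Z) (U (a+2)%Z) <= 2).
    { apply (sep_use U 0 a _ _ n (a+2)%Z Hsep); [|f_equal; lia|lia].
      apply (eqU U n Hc). lia. }
    assert (dd (U 1%Z) (U (a+2)%Z) <> 2); [|lia].
    intros E. apply dd_two in E. destruct E as [w [Hw1 Hw2]].
    assert (A : adj (U (a+2)%Z) (U (a+1)%Z)) by adjt Hc.
    destruct (uniq3 _ _ _ _ _ _ Hd Hw1 Hw2 A A10 H0a Aa) as [_ E]. neqt Hc E.
Qed.

Lemma DC1 U a : cyc U n -> adj (U 0%Z) (U a) -> (2 <= a <= n - 2)%Z ->
  dd (U 1%Z) (U (a+1)%Z) = 3 -> a = 4%Z.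
Proof.
  intros Hc H0a Ha Hd. pose proof (U_n3 U n Hc) as Hn3.
  destruct (DCg U a Hc H0a Ha Hd) as [Ha3 [g1 g2]].
  destruct (dd_walk (U 2%Z) (U (a+1)%Z)) as [Q HQ]. rewrite g1 in HQ.
  pose proof HQ as [HQ0 [HQ3 HQa]].
  assert (A12 := HQa 1 ltac:(lia)). assert (A23 := HQa 2 ltac:(lia)).
  rewrite HQ3 in A23.
  destruct (P1 U 2 (U (a+1)%Z) Q Hc g1 ltac:(eexists; reflexivity) HQ) as [E1|E1];
  rewrite E1 in A12;
  (destruct (P1e U (U 2%Z) (a+1) Q Hc g1 ltac:(eexists; reflexivity) HQ) as [E2|E2];
   rewrite E2 in A12, A23).
  - exfalso.
    assert (Hs : sep U 3 (a - 1)).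
    { apply chord; auto; [|lia]. eapply adj_eq; [exact A12|lia|lia]. }
    assert (dd (U (a+2)%Z) (U 1%Z) <= 2); [|rewrite dd_sym in H; lia].
    apply (sep_use U 3 (a-1) _ _ (a-1)%Z (n-2)%Z Hs); [f_equal; lia| |lia].
    apply (eqU U n Hc). lia.
  - destruct (Z.eq_dec a 4); auto. exfalso.
    destruct (Z.eq_dec a 3).
    { subst a. apply (Hirr (U 3%Z)). eapply adj_eq; [exact A12|lia|lia]. }
    assert (Hs : sep U 3 (a - 3)).
    { apply chord; auto; [|lia]. eapply adj_eq; [exact A12|lia|lia]. }
    assert (dd (U (a+1)%Z) (U 2%Z) <= 2); [|rewrite dd_sym in H; lia].
    apply (sep_use U 3 (a-3) _ _ (a-2)%Z (n-1)%Z Hs); [f_equal; lia| |lia].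
    apply (eqU U n Hc). lia.
  - exfalso. replace (2 - 1)%Z with 1%Z in A12 by lia.
    pose proof (le_via2 _ _ _ A12 A23). lia.
  - exfalso. replace (2 - 1)%Z with 1%Z in A12 by lia.
    pose proof (le_via2 _ _ _ A12 A23). lia.
Qed.

Lemma DCONF U a : cyc U n -> adj (U 0%Z) (U a) -> (2 <= a <= n - 2)%Z ->
  dd (U 1%Z) (U (a+1)%Z) = 3 -> False.
Proof.
  intros Hc H0a Ha Hd. pose proof (U_n3 U n Hc) as Hn3.
  assert (Ha4 := DC1 U a Hc H0a Ha Hd).
  assert (Hc' := cyc_rot U n a Hc).
  assert (Hn4 : (n - a = 4)%Z).
  { apply (DC1 (fun t => U (a + t)%Z) (n - a) Hc').
    - cbv beta. replace (U (a + (n - a))%Z) with (U 0%Z) by (apply (eqU U n Hc); lia).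
      replace (a + 0)%Z with a by lia. apply Hsym; auto.
    - lia.
    - cbv beta. rewrite dd_sym.
      replace (U (a + (n - a + 1))%Z) with (U 1%Z) by (apply (eqU U n Hc); lia).
      exact Hd. }
  destruct (DCg U a Hc H0a Ha Hd) as [_ [g1 g2]].
  assert (Hn8 : n = 8%Z) by lia. subst a.
  replace (4 + 1)%Z with 5%Z in Hd, g1 by lia. replace (4 + 2)%Z with 6%Z in g2 by lia.
  assert (Hsep : sep U 0 4) by (apply chord; auto; lia).
  assert (A23 : adj (U 2%Z) (U 3%Z)) by adjt Hc.
  assert (A34 : adj (U 3%Z) (U 4%Z)) by adjt Hc.
  assert (A45 : adj (U 4%Z) (U 5%Z)) by adjt Hc.
  assert (A56 : adj (U 5%Z) (U 6%Z)) by adjt Hc.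
  assert (A67 : adj (U 6%Z) (U 7%Z)) by adjt Hc.
  assert (A70 : adj (U 7%Z) (U 0%Z)) by adjt Hc.
  assert (A01 : adj (U 0%Z) (U 1%Z)) by adjt Hc.
  assert (A12 : adj (U 1%Z) (U 2%Z)) by adjt Hc.
  assert (Hge : 2 <= dd (U 2%Z) (U 6%Z)).
  { pose proof (dd_tri (U 2%Z) (U 6%Z) (U 5%Z)). pose proof (dd_adj _ _ (Hsym _ _ A56)). lia. }
  assert (Hle : dd (U 2%Z) (U 6%Z) <= 4).
  { pose proof (dd_arc U n Hc 2 4 ltac:(lia)). replace (2 + 4)%Z with 6%Z in H by lia. lia. }
  destruct (dd (U 2%Z) (U 6%Z)) as [|[|[|[|[|]]]]] eqn:E; try lia.
  - apply dd_two in E. destruct E as [h [Hh1 Hh2]].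
    destruct (uniq3 _ _ _ _ _ _ g1 Hh1 Hh2 (Hsym _ _ A56) A23 A34 A45) as [_ E]. neqt Hc E.
  - destruct (dd_walk (U 2%Z) (U 6%Z)) as [Q HQ]. rewrite E in HQ.
    pose proof HQ as [HQ0 [HQ3 HQa]].
    assert (B12 := HQa 1 ltac:(lia)).
    destruct (P1 U 2 (U 6%Z) Q Hc E ltac:(eexists; reflexivity) HQ) as [E1|E1];
    rewrite E1 in B12;
    (destruct (P1e U (U 2%Z) 6 Q Hc E ltac:(eexists; reflexivity) HQ) as [E2|E2];
     rewrite E2 in B12).
    + exfalso.
      replace (2 + 1)%Z with 3%Z in B12 by lia. replace (6 + 1)%Z with 7%Z in B12 by lia.
      assert (H03 : dd (U 0%Z) (U 3%Z) <= 2).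
      { apply (sep_use U 0 4 _ _ 0%Z 3%Z Hsep); [f_equal; lia|f_equal; lia|lia]. }
      assert (H03' : 1 <= dd (U 0%Z) (U 3%Z)).
      { apply dd_ge1. intros E'. neqt Hc E'. }
      destruct (dd (U 0%Z) (U 3%Z)) as [|[|[|]]] eqn:E3; try lia.
      * apply dd_one in E3.
        assert (H13 : dd (U 1%Z) (U 3%Z) <= 2) by exact (le_via2 _ _ _ A12 A23).
        assert (H13' : 1 <= dd (U 1%Z) (U 3%Z)).
        { apply dd_ge1. intros E'. neqt Hc E'. }
        destruct (dd (U 1%Z) (U 3%Z)) as [|[|[|]]] eqn:E4; try lia.
        -- apply dd_one in E4.
           assert (Hs : sep U 1 2) by (apply chord; [auto|eapply adj_eq; [exact E4|lia|lia]|lia]).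
           assert (dd (U 5%Z) (U 1%Z) <= 2); [|rewrite dd_sym in H; lia].
           apply (sep_use U 1 2 _ _ 4%Z n Hs); [f_equal; lia| |lia].
           apply (eqU U n Hc). lia.
        -- pose proof (uniq2 _ _ _ _ E4 A12 A23 (Hsym _ _ A01) E3) as E'. neqt Hc E'.
      * pose proof (uniq2 _ _ _ _ E3 H0a (Hsym _ _ A34) (Hsym _ _ A70) (Hsym _ _ B12)) as E'.
        neqt Hc E'.
    + exfalso. replace (2 + 1)%Z with 3%Z in B12 by lia.
      replace (6 - 1)%Z with 5%Z in B12 by lia.
      pose proof (le_via2 _ _ _ A23 B12). lia.
    + exfalso. replace (2 - 1)%Z with 1%Z in B12 by lia.
      replace (6 + 1)%Z with 7%Z in B12 by lia.
      pose proof (le_via2 _ _ _ B12 (Hsym _ _ A67)). lia.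
    + exfalso. replace (2 - 1)%Z with 1%Z in B12 by lia.
      replace (6 - 1)%Z with 5%Z in B12 by lia. apply dd_adj in B12. lia.
  - pose proof (uniq4 _ _ _ _ _ _ _ _ E A23 A34 A45 A56 (Hsym _ _ A12) (Hsym _ _ A01) (Hsym _ _ A70) (Hsym _ _ A67)) as E'. neqt Hc E'.
Qed.

Lemma FAR3 U a b : cyc U n -> dd (U a) (U b) = 3 -> U b = U (a + 3)%Z \/ U b = U (a - 3)%Z.
Proof.
  intros Hc Hd. pose proof (U_n3 U n Hc) as Hn3.
  destruct (dd_walk (U a) (U b)) as [Q HQ]. rewrite Hd in HQ.
  pose proof HQ as [HQ0 [HQ3 HQa]].
  assert (A01 := HQa 0 ltac:(lia)). assert (A12 := HQa 1 ltac:(lia)). assert (A23 := HQa 2 ltac:(lia)).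
  rewrite HQ0 in A01. rewrite HQ3 in A23.
  assert (H1 : exists e1, (e1 = 1 \/ e1 = -1)%Z /\ Q 1 = U (a + e1)%Z).
  { destruct (P1 U a (U b) Q Hc Hd ltac:(eexists; reflexivity) HQ) as [E|E];
    [exists 1%Z|exists (-1)%Z]; split; auto; rewrite E; f_equal; lia. }
  assert (H2 : exists e2, (e2 = 1 \/ e2 = -1)%Z /\ Q 2 = U (b + e2)%Z).
  { destruct (P1e U (U a) b Q Hc Hd ltac:(eexists; reflexivity) HQ) as [E|E];
    [exists 1%Z|exists (-1)%Z]; split; auto; rewrite E; f_equal; lia. }
  destruct H1 as [e1 [He1 E1]]. destruct H2 as [e2 [He2 E2]].
  set (s := (a + e1)%Z) in *.
  destruct (U_norm U n Hc s (b + e2)) as [j [Hj Ej]].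
  assert (Hy : U b = U (s + j - e2)%Z).
  { pose proof (U_shift U n Hc _ _ (- e2) Ej) as H.
    transitivity (U (b + e2 + - e2)%Z); [f_equal; lia|]. rewrite H. f_equal; lia. }
  assert (Hx : U a = U (s - e1)%Z) by (f_equal; unfold s; lia).
  rewrite E1 in A01, A12. rewrite E2 in A12, A23. rewrite Ej in A12, A23.
  assert (F1 : U (s + j)%Z <> U a).
  { intros E. rewrite E in A23. apply dd_adj in A23. lia. }
  assert (F2 : U b <> U s).
  { intros E. rewrite <- E in A01. apply dd_adj in A01. lia. }
  destruct (Z.eq_dec j 0) as [Hj0|Hj0].
  { exfalso. subst j. apply (Hirr (U s)). eapply adj_eq; [exact A12|lia|lia]. }
  destruct (Z_le_gt_dec 2 j) as [Hj2|Hj2]; [destruct (Z_le_gt_dec j (n - 2)) as [Hj3|Hj3]|].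
  - exfalso. assert (Hs : sep U s j) by (apply chord; auto).
    destruct He1 as [-> | ->]; destruct He2 as [-> | ->].
    + apply (DCONF (fun t => U (s + j - t)%Z) j (cyc_refl U n (s + j) Hc)); cbv beta; try lia.
      * apply Hsym. eapply adj_eq; [exact A12|lia|lia].
      * rewrite dd_sym. rewrite Hx, Hy in Hd. rewrite <- Hd. f_equal; f_equal; lia.
    + assert (dd (U a) (U b) <= 2); [|lia].
      apply (sep_use U s j _ _ (n - 1)%Z (j + 1)%Z Hs); [|rewrite Hy; f_equal; lia|lia].
      rewrite Hx. apply (eqU U n Hc). lia.
    + assert (dd (U a) (U b) <= 2); [|lia].
      apply (sep_use U s j _ _ 1%Z (j - 1)%Z Hs); [|rewrite Hy; f_equal; lia|lia].
      rewrite Hx. f_equal; lia.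
    + apply (DCONF (fun t => U (s + t)%Z) j (cyc_rot U n s Hc)); cbv beta; try lia.
      * eapply adj_eq; [exact A12|lia|lia].
      * rewrite Hx, Hy in Hd. rewrite <- Hd. f_equal; f_equal; lia.
  - assert (Hjn : j = (n - 1)%Z) by lia. subst j.
    destruct He1 as [-> | ->]; destruct He2 as [-> | ->];
    first [ left; rewrite Hy; apply (eqU U n Hc); lia
          | right; rewrite Hy; apply (eqU U n Hc); lia
          | exfalso; apply F1; rewrite Hx; apply (eqU U n Hc); lia
          | exfalso; apply F2; rewrite Hy; apply (eqU U n Hc); lia ].
  - assert (Hjn : j = 1%Z) by lia. subst j.
    destruct He1 as [-> | ->]; destruct He2 as [-> | ->];
    first [ left; rewrite Hy; apply (eqU U n Hc); lia
          | right; rewrite Hy; apply (eqU U n Hc); lia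
          | exfalso; apply F1; rewrite Hx; apply (eqU U n Hc); lia
          | exfalso; apply F2; rewrite Hy; apply (eqU U n Hc); lia ].
Qed.

Lemma PROP U e : cyc U n -> dd (U e) (U (e+3)%Z) = 3 -> dd (U (e+1)%Z) (U (e+4)%Z) = 3.
Proof.
  intros Hc Hd. pose proof (U_n3 U n Hc) as Hn3.
  assert (Hup : dd (U (e+1)%Z) (U (e+4)%Z) <= 3).
  { pose proof (dd_arc U n Hc (e+1) 3 ltac:(lia)) as H.
    replace (e + 1 + 3)%Z with (e+4)%Z in H by lia. lia. }
  assert (A0 : adj (U e) (U (e+1)%Z)) by adjt Hc.
  assert (A1 : adj (U (e+1)%Z) (U (e+2)%Z)) by adjt Hc.
  assert (A2 : adj (U (e+2)%Z) (U (e+3)%Z)) by adjt Hc.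
  assert (A3 : adj (U (e+3)%Z) (U (e+4)%Z)) by adjt Hc.
  assert (HD1 : 2 <= dd (U e) (U (e+4)%Z)).
  { pose proof (dd_tri (U e) (U (e+4)%Z) (U (e+3)%Z)).
    pose proof (dd_adj _ _ (Hsym _ _ A3)). lia. }
  assert (HD2 : dd (U e) (U (e+4)%Z) <= 1 + dd (U (e+1)%Z) (U (e+4)%Z)).
  { pose proof (dd_tri (U e) (U (e+1)%Z) (U (e+4)%Z)). pose proof (dd_adj _ _ A0). lia. }
  destruct (dd (U e) (U (e+4)%Z)) as [|[|[|[|]]]] eqn:E; try lia.
  - apply dd_two in E. destruct E as [w [Hw1 Hw2]].
    destruct (uniq3 _ _ _ _ _ _ Hd Hw1 Hw2 (Hsym _ _ A3) A0 A1 A2) as [_ E']. neqt Hc E'.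
  - destruct (FAR3 U e (e+4) Hc E) as [E'|E'].
    + neqt Hc E'.
    + destruct (dd (U (e+1)%Z) (U (e+4)%Z)) as [|[|[|]]] eqn:E2; try lia.
      apply dd_two in E2. destruct E2 as [z [Hz1 Hz2]].
      assert (B1 : adj (U e) (U (e-1)%Z)) by adjt Hc.
      assert (B2 : adj (U (e-1)%Z) (U (e-2)%Z)) by adjt Hc.
      assert (B3 : adj (U (e-2)%Z) (U (e+4)%Z)) by (rewrite E'; adjt Hc).
      destruct (uniq3 _ _ _ _ _ _ E A0 Hz1 Hz2 B1 B2 B3) as [E3 _]. neqt Hc E3.
Qed.

Lemma ALLW U e0 : cyc U n -> dd (U e0) (U (e0+3)%Z) = 3 -> forall e, dd (U e) (U (e+3)%Z) = 3.
Proof.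
  intros Hc H0 e.
  assert (Hk : forall k : nat, dd (U (e0 + Z.of_nat k)%Z) (U (e0 + Z.of_nat k + 3)%Z) = 3).
  { induction k.
    - replace (e0 + Z.of_nat 0)%Z with e0 by lia. auto.
    - pose proof (PROP U (e0 + Z.of_nat k) Hc IHk) as H.
      replace (e0 + Z.of_nat (S k))%Z with (e0 + Z.of_nat k + 1)%Z by lia.
      replace (e0 + Z.of_nat k + 1 + 3)%Z with (e0 + Z.of_nat k + 4)%Z by lia. auto. }
  destruct (U_norm U n Hc e0 e) as [j [Hj Ej]].
  specialize (Hk (Z.to_nat j)). rewrite Z2Nat.id in Hk by lia.
  rewrite Ej. rewrite (U_shift U n Hc _ _ 3 Ej). auto.
Qed.

Lemma STRICT U : cyc U n -> forall d a b, dd (U a) (U b) = d -> (0 < b - a < n)%Z ->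
  (Z.of_nat d < b - a)%Z -> (Z.of_nat d < n - (b - a))%Z ->
  exists s j, (2 <= j <= n - 2)%Z /\ sep U s j.
Proof.
  intros Hc d. induction d as [d IHd] using (well_founded_induction lt_wf).
  intros a b Hd Hab H1 H2.
  destruct (dd_walk (U a) (U b)) as [R HR].
  assert (Hd1 : 1 <= d).
  { destruct d; [|lia]. apply dd_zero in Hd. exfalso. refine (neqU U n Hc _ _ _ Hd). lia. }
  destruct (first_hit (fun g => 1 <= g /\ exists s, R g = U s) (dd (U a) (U b)))
    as [be [Hbe [[Hbe1 [e2 He2]] Hmin]]].
  { split; [lia|]. exists b. apply HR. }
  assert (HR0 : R 0 = U a) by apply HR.
  assert (Hoff : forall c x, 0 < c < be -> R c <> U x).
  { intros c x Hc1 Hcx. apply (Hmin c); [lia|]. split; [lia|]. eauto. }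
  destruct (GEOSEG U (U a) (U b) R 0 be a e2 Hc HR ltac:(lia) ltac:(lia) HR0 He2 Hoff)
    as [[Hb1 Hed]|[j [Hj [He Hsep]]]]; [|eauto].
  subst be.
  assert (Hsub : dd (R 1) (R (dd (U a) (U b))) = dd (U a) (U b) - 1).
  { apply (subgeo R (U a) (U b) 1 _ HR); lia. }
  assert (HRe : R (dd (U a) (U b)) = U b) by apply HR.
  rewrite HRe, He2 in Hsub.
  destruct Hed as [Ee|Ee]; rewrite Ee in Hsub.
  - destruct (Z.eq_dec b (a + 1)) as [Eb|Eb]; [lia|].
    apply (IHd (d - 1) ltac:(lia) (a + 1)%Z b); try lia.
  - apply (IHd (d - 1) ltac:(lia) (a - 1)%Z b); try lia.
Qed.

Lemma MAIN U : cyc U n ->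
  ((6 <= n)%Z -> exists a b, (0 < b - a < n)%Z /\ (Z.of_nat (dd (U a) (U b)) < b - a)%Z /\
     (Z.of_nat (dd (U a) (U b)) < n - (b - a))%Z) ->
  forall a b, dd (U a) (U b) <= 2.
Proof.
  intros Hc Hiso a b. pose proof (U_n3 U n Hc) as Hn3.
  destruct (le_lt_dec (dd (U a) (U b)) 2) as [|Hlt]; auto. exfalso.
  destruct (U_norm U n Hc a b) as [k [Hk Ek]].
  assert (Hivt : forall t0 : nat, 3 <= dd (U a) (U (a + Z.of_nat t0)%Z) ->
            exists t, dd (U a) (U (a + Z.of_nat t)%Z) = 3).
  { induction t0; intros H.
    - replace (a + Z.of_nat 0)%Z with a in H by lia. rewrite dd_refl in H. lia.
    - destruct (le_lt_dec 3 (dd (U a) (U (a + Z.of_nat t0)%Z))); auto.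
      exists (S t0).
      pose proof (dd_tri (U a) (U (a + Z.of_nat t0)%Z) (U (a + Z.of_nat (S t0))%Z)).
      assert (dd (U (a + Z.of_nat t0)%Z) (U (a + Z.of_nat (S t0))%Z) <= 1) by (apply dd_adj; adjt Hc).
      lia. }
  destruct (Hivt (Z.to_nat k)) as [t Ht].
  { rewrite Z2Nat.id by lia. rewrite <- Ek. lia. }
  assert (Hwin : exists e0, dd (U e0) (U (e0 + 3)%Z) = 3).
  { destruct (FAR3 U a _ Hc Ht) as [E|E]; rewrite E in Ht.
    - eauto.
    - exists (a - 3)%Z. rewrite dd_sym. replace (a - 3 + 3)%Z with a by lia. auto. }
  destruct Hwin as [e0 He0].
  pose proof (ALLW U e0 Hc He0) as Hall.
  assert (Hn6 : (6 <= n)%Z).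
  { specialize (Hall 0%Z). pose proof (dd_arc U n Hc 3 (n - 3) ltac:(lia)) as H.
    replace (U (3 + (n - 3))%Z) with (U 0%Z) in H by (apply (eqU U n Hc); lia).
    rewrite dd_sym in H. replace (0 + 3)%Z with 3%Z in Hall by lia. lia. }
  destruct (Hiso Hn6) as [a' [b' [Hab [H1 H2]]]].
  destruct (STRICT U Hc _ a' b' eq_refl Hab H1 H2) as [s [j [Hj Hsep]]].
  destruct (Z_le_gt_dec 3 j).
  - assert (dd (U s) (U (s + 3)%Z) <= 2).
    { apply (sep_use U s j _ _ 0%Z 3%Z Hsep); [f_equal; lia|f_equal; lia|lia]. }
    rewrite Hall in H. lia.
  - assert (dd (U (s + 2)%Z) (U (s + 2 + 3)%Z) <= 2).
    { apply (sep_use U s j _ _ 2%Z 5%Z Hsep); [f_equal; lia|f_equal; lia|lia]. }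
    rewrite Hall in H. lia.
Qed.

End IHsec.

Lemma u_walk u N i j : embedded_circuit V adj u N -> i <= j -> j <= N -> dd (u i) (u j) <= j - i.
Proof.
  intros [Ha _] Hij HjN. apply (dd_le (fun t => u (i + t))). split; [|split].
  - f_equal; lia.
  - f_equal; lia.
  - intros t Ht. replace (i + S t) with (S (i + t)) by lia. apply Ha. lia.
Qed.

Lemma main_all : (forall u N, isometric_circuit V adj u N -> N <= 5) ->
  forall N u, embedded_circuit V adj u N -> circuit_diam_le V adj u N 2.
Proof.
  intros Hiso N. induction N as [N IHN] using (well_founded_induction lt_wf).
  intros u Hemb i j k Hi Hj Hk. apply dist_dd in Hk. subst k.
  destruct (le_lt_dec N 2) as [HN|HN].
  - destruct (le_lt_dec i j) as [l|l].
    + pose proof (u_walk u N i j Hemb l Hj). lia.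
    + rewrite dd_sym. pose proof (u_walk u N j i Hemb ltac:(lia) Hi). lia.
  - assert (Hn0 : u N = u 0) by apply Hemb.
    pose proof Hemb as HE. destruct Hemb as [Hadj [_ Hinj]].
    set (U := fun t : Z => u (Z.to_nat (t mod Z.of_nat N))).
    assert (HUi : forall i, i <= N -> u i = U (Z.of_nat i)).
    { intros i' Hi'. unfold U. destruct (Nat.eq_dec i' N).
      - subst. rewrite Z_mod_same_full. simpl. auto.
      - rewrite Z.mod_small by lia. rewrite Nat2Z.id. auto. }
    assert (Hc : cyc U (Z.of_nat N)).
    { split; [lia|split; [|split]].
      - intros t. unfold U. replace (t + Z.of_nat N)%Z with (t + 1 * Z.of_nat N)%Z by lia.
        rewrite Z_mod_plus_full. auto.
      - intros t. unfold U.
        pose proof (Z.div_mod t (Z.of_nat N) ltac:(lia)) as Hdm.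
        pose proof (Z.mod_pos_bound t (Z.of_nat N) ltac:(lia)) as Hb.
        set (r := (t mod Z.of_nat N)%Z) in *. set (q := (t / Z.of_nat N)%Z) in *.
        destruct (Z_lt_le_dec (r + 1) (Z.of_nat N)).
        + rewrite <- (Z.mod_unique (t + 1) (Z.of_nat N) q (r + 1)) by lia.
          replace (Z.to_nat (r + 1)) with (S (Z.to_nat r)) by lia. apply Hadj. lia.
        + rewrite <- (Z.mod_unique (t + 1) (Z.of_nat N) (q + 1) 0) by lia.
          simpl. rewrite <- Hn0. replace (u N) with (u (S (Z.to_nat r))) by (f_equal; lia). apply Hadj. lia.
      - intros s t Hst He. unfold U in He.
        pose proof (Z.div_mod t (Z.of_nat N) ltac:(lia)) as Hdt.
        pose proof (Z.mod_pos_bound t (Z.of_nat N) ltac:(lia)) as Hbt.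
        pose proof (Z.div_mod s (Z.of_nat N) ltac:(lia)) as Hds.
        pose proof (Z.mod_pos_bound s (Z.of_nat N) ltac:(lia)) as Hbs.
        apply Hinj in He; try lia.
        assert (Er : (s mod Z.of_nat N = t mod Z.of_nat N)%Z) by lia.
        set (rs := (s mod Z.of_nat N)%Z) in *. set (rt := (t mod Z.of_nat N)%Z) in *.
        set (qs := (s / Z.of_nat N)%Z) in *. set (qt := (t / Z.of_nat N)%Z) in *.
        assert (qs = qt) by nia. nia. }
    assert (IH' : forall m w, (Z.of_nat m < Z.of_nat N)%Z -> embedded_circuit V adj w m ->
               circuit_diam_le V adj w m 2).
    { intros m w Hm Hw. apply (IHN m); auto; lia. }
    rewrite (HUi i Hi), (HUi j Hj).
    apply (MAIN (Z.of_nat N) IH' U Hc).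
    intros Hn6.
    assert (Hni : ~ isometric_circuit V adj u N) by (intro H; apply Hiso in H; lia).
    apply NNPP. intro Hne. apply Hni. split; [exact HE|].
    intros i' j' Hij HjN.
    destruct (Nat.eq_dec (dd (u i') (u j')) (Nat.min (j' - i') (N + i' - j'))) as [E|E].
    + rewrite <- E. apply dd_spec.
    + exfalso. apply Hne. exists (Z.of_nat i'), (Z.of_nat j').
      rewrite <- (HUi i'), <- (HUi j') by lia.
      pose proof (u_walk u N i' j' HE ltac:(lia) ltac:(lia)).
      assert (dd (u i') (u j') <= N + i' - j').
      { rewrite dd_sym. pose proof (dd_tri (u j') (u N) (u i')).
        pose proof (u_walk u N j' N HE ltac:(lia) ltac:(lia)).
        pose proof (u_walk u N 0 i' HE ltac:(lia) ltac:(lia)). rewrite <- Hn0 in H2. lia. }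
      lia.
Qed.

End Main.

Theorem theorem2 (V : Type) (adj : V -> V -> Prop) :
  simple_graph V adj -> locally_finite V adj -> geodetic V adj ->
  (forall (u : nat -> V) (n : nat), isometric_circuit V adj u n -> n <= 5) ->
  forall (u : nat -> V) (n : nat), embedded_circuit V adj u n ->
    circuit_diam_le V adj u n 2.
Proof.
  intros [Hs Hi] _ [Hc Hu] Hiso u n He.
  eapply main_all; eauto.
Qed.
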